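(* Let $(\widetilde M,\tilde g)$ be a two-sphere of revolution with poles $\tilde p,\tilde q$, normalized so that $d(\tilde p,\tilde q)=\pi$. Then the diameter $\mathrm{Diam}(\widetilde M):=\max\{d(\tilde x,\tilde y)\mid \tilde x,\tilde y\in\widetilde M\}$ equals $\pi=d(\tilde p,\tilde q)$.
   Context: A two-sphere of revolution is a Riemannian manifold homeomorphic to $S^2$ admitting a point $\tilde p$ whose cut locus is a single point $\tilde q$, such that on $\widetilde M\setminus\{\tilde p,\tilde q\}$ the metric in geodesic polar coordinates $(r,\theta)$ around $\tilde p$ is $dr^2+f(r)^2d\theta^2$ with $f$ smooth on $[0,d(\tilde p,\tilde q)]$, $f(0)=f(d(\tilde p,\tilde q))=0$. $d$ denotes Riemannian distance. *)

(* Defs.v *)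
(* Concrete model of a two-sphere of revolution with d(p,q) = PI:
   points are geodesic polar coordinates (r, theta), r in [0,PI],
   theta in R taken mod 2*PI, with all points r = 0 identified (pole p)
   and all points r = PI identified (pole q). *)
From Stdlib Require Import Reals Lra List.
From Coquelicot Require Import Coquelicot.
Open Scope R_scope.

(* Conditions on the warping function f making dr^2 + f(r)^2 dtheta^2 a
   smooth Riemannian metric on S^2 with poles at r = 0 and r = PI:
   f smooth (given as a smooth function on R, i.e. a smooth extension of
   f|[0,PI]), f(0) = f(PI) = 0, f > 0 on (0,PI), and the standard
   smoothness conditions at the poles: f'(0) = 1, f'(PI) = -1 and all
   even-order derivatives vanish at 0 and PI. *)
Definition revolution_profile (f : R -> R) : Prop :=
  (forall (n : nat) (x : R), ex_derive (Derive_n f n) x) /\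
  f 0 = 0 /\ f PI = 0 /\
  (forall r, 0 < r < PI -> 0 < f r) /\
  Derive f 0 = 1 /\ Derive f PI = -1 /\
  (forall k : nat, Derive_n f (2 * k) 0 = 0 /\ Derive_n f (2 * k) PI = 0).

Definition point : Type := (R * R)%type.

Definition valid_point (x : point) : Prop := 0 <= fst x <= PI.

Definition same_point (x y : point) : Prop :=
  fst x = fst y /\
  (fst x = 0 \/ fst x = PI \/ exists k : Z, snd y = snd x + 2 * PI * IZR k).

Record segment : Type := Seg { seg_r : R -> R ; seg_th : R -> R }.

Definition admissible_segment (s : segment) : Prop :=
  (forall t, 0 <= t <= 1 ->
     ex_derive (seg_r s) t /\ ex_derive (seg_th s) t /\
     continuous (Derive (seg_r s)) t /\ continuous (Derive (seg_th s)) t /\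
     0 <= seg_r s t <= PI).

Definition seg_start (s : segment) : point := (seg_r s 0, seg_th s 0).
Definition seg_end (s : segment) : point := (seg_r s 1, seg_th s 1).

Definition seg_length (f : R -> R) (s : segment) : R :=
  RInt (fun t => sqrt ((Derive (seg_r s) t) ^ 2
                       + (f (seg_r s t)) ^ 2 * (Derive (seg_th s) t) ^ 2)) 0 1.

(* a piecewise C^1 curve from x to y given by consecutive segments *)
Fixpoint chain (x : point) (l : list segment) (y : point) : Prop :=
  match l with
  | nil => same_point x y
  | s :: l' => admissible_segment s /\ same_point x (seg_start s) /\
               chain (seg_end s) l' y
  end.

Definition path_length (f : R -> R) (l : list segment) : R :=
  fold_right (fun s acc => seg_length f s + acc) 0 l.

Definition rdist (f : R -> R) (x y : point) : Rbar :=
  Glb_Rbar (fun L => exists l, chain x l y /\ L = path_length f l).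

Definition pole_p : point := (0, 0).
Definition pole_q : point := (PI, 0).

(* Main.v *)
Require Import Defs.
From Stdlib Require Import Reals.
From Coquelicot Require Import Coquelicot.
From Stdlib Require Import Lra FunctionalExtensionality.
Open Scope R_scope.

Lemma cont_sq (g : R -> R) x : continuous g x -> continuous (fun t => g t ^ 2) x.
Proof.
  intro H. apply continuous_ext with (fun t => mult (g t) (g t)).
  intro; unfold mult; simpl; ring.
  apply (@continuous_mult _ R_AbsRing); auto.
Qed.

Lemma integrand_cont (f : R -> R) (s : segment) t :
  (forall x, ex_derive f x) -> admissible_segment s -> 0 <= t <= 1 ->
  continuous (fun t => sqrt ((Derive (seg_r s) t) ^ 2
                       + (f (seg_r s t)) ^ 2 * (Derive (seg_th s) t) ^ 2)) t.
Proof.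
  intros Hd Ha Ht. destruct (Ha t Ht) as (H1 & H2 & H3 & H4 & H5).
  apply continuous_sqrt_comp.
  apply continuous_ext with (fun t => plus (Derive (seg_r s) t ^ 2)
     (mult (f (seg_r s t) ^ 2) (Derive (seg_th s) t ^ 2))).
  intro; reflexivity.
  apply (@continuous_plus _ R_AbsRing R_NormedModule). apply cont_sq; auto.
  apply (@continuous_mult _ R_AbsRing); apply cont_sq; auto.
  apply (@continuous_comp R_UniformSpace R_UniformSpace R_UniformSpace). apply (@ex_derive_continuous R_AbsRing R_NormedModule); auto.
  apply (@ex_derive_continuous R_AbsRing R_NormedModule); auto.
Qed.

Lemma seg_length_ge (f : R -> R) (s : segment) :
  (forall x, ex_derive f x) -> admissible_segment s ->
  seg_r s 1 - seg_r s 0 <= seg_length f s.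
Proof.
  intros Hd Ha. unfold seg_length.
  assert (HI : is_RInt (Derive (seg_r s)) 0 1 (minus (seg_r s 1) (seg_r s 0))).
  { apply (@is_RInt_derive R_CompleteNormedModule).
    - intros x Hx. rewrite Rmin_left in Hx by lra. rewrite Rmax_right in Hx by lra.
      destruct (Ha x Hx) as (H1 & _). apply Derive_correct; auto.
    - intros x Hx. rewrite Rmin_left in Hx by lra. rewrite Rmax_right in Hx by lra.
      destruct (Ha x Hx) as (_ & _ & H3 & _). auto. }
  replace (seg_r s 1 - seg_r s 0) with (RInt (Derive (seg_r s)) 0 1).
  2:{ rewrite (is_RInt_unique _ _ _ _ HI). reflexivity. }
  apply RInt_le. lra. eexists; eauto.
  apply (@ex_RInt_continuous R_CompleteNormedModule). intros z Hz.
  rewrite Rmin_left in Hz by lra. rewrite Rmax_right in Hz by lra.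
  apply integrand_cont; auto.
  intros x Hx.
  apply Rle_trans with (Rabs (Derive (seg_r s) x)). apply Rle_abs.
  rewrite <- sqrt_Rsqr_abs. apply sqrt_le_1_alt.
  assert (0 <= f (seg_r s x) ^ 2 * Derive (seg_th s) x ^ 2).
  { apply Rmult_le_pos; apply pow2_ge_0. }
  unfold Rsqr. simpl in *. nra.
Qed.

Lemma chain_ge (f : R -> R) l : (forall x, ex_derive f x) ->
  forall x y, chain x l y -> fst y - fst x <= path_length f l.
Proof.
  intro Hd. induction l as [|s l IH]; intros x y Hc; simpl in *.
  - destruct Hc as [E _]. lra.
  - destruct Hc as (Ha & [E _] & Hc). apply IH in Hc.
    pose proof (seg_length_ge f s Hd Ha). unfold seg_start, seg_end in *; simpl in *. lra.
Qed.

Definition mer (a b c : R) : segment := Seg (fun t => a + (b - a) * t) (fun _ => c).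

Lemma mer_Dr a b c : Derive (seg_r (mer a b c)) = fun _ => b - a.
Proof.
  apply functional_extensionality; intro t. simpl.
  apply is_derive_unique. auto_derive; auto; ring.
Qed.

Lemma mer_Dth a b c : Derive (seg_th (mer a b c)) = fun _ => 0.
Proof. apply functional_extensionality; intro t. simpl. apply Derive_const. Qed.

Lemma mer_adm a b c : 0 <= a <= PI -> 0 <= b <= PI -> admissible_segment (mer a b c).
Proof.
  intros Ha Hb t Ht. rewrite mer_Dr, mer_Dth. simpl.
  repeat split.
  - auto_derive; auto.
  - auto_derive; auto.
  - apply continuous_const.
  - apply continuous_const.
  - destruct (Rle_dec a b); nra.
  - destruct (Rle_dec a b); nra.
Qed.

Lemma mer_len f a b c : seg_length f (mer a b c) = Rabs (b - a).
Proof.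
  unfold seg_length. rewrite mer_Dr, mer_Dth.
  rewrite (RInt_ext _ (fun _ => Rabs (b - a))).
  rewrite RInt_const. unfold scal; simpl; unfold mult; simpl. ring.
  intros x _. replace ((b - a) ^ 2 + f (seg_r (mer a b c) x) ^ 2 * 0 ^ 2) with ((Rabs (b-a))^2).
  apply sqrt_pow2, Rabs_pos. rewrite pow2_abs. ring.
Qed.

Lemma glb_le (E : R -> Prop) v w : E v -> v <= w -> Rbar_le (Glb_Rbar E) w.
Proof.
  intros Ev H. destruct (Glb_Rbar_correct E) as [Hlb _].
  apply Rbar_le_trans with v. apply Hlb; auto. simpl; auto.
Qed.

Theorem lemma2p2 (f : R -> R) (Hf : revolution_profile f) :
  (forall x y : point, valid_point x -> valid_point y ->
     Rbar_le (rdist f x y) (Finite PI)) /\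
  rdist f pole_p pole_q = Finite PI.
Proof.
  assert (Hd : forall x, ex_derive f x).
  { destruct Hf as [H _]. intro x. exact (H O x). }
  pose proof PI_RGT_0 as HPI.
  split.
  - intros [r1 t1] [r2 t2] Hx Hy. unfold valid_point in *; simpl in *.
    unfold rdist.
    destruct (Rle_dec (r1 + r2) PI).
    + apply glb_le with (path_length f (mer r1 0 t1 :: mer 0 r2 t2 :: nil)).
      * eexists; split; [|reflexivity]. simpl.
        split. apply mer_adm; lra.
        split. split; [simpl; ring| right; right; exists 0%Z; simpl; ring].
        split. apply mer_adm; lra.
        split. split; [unfold seg_end, seg_start; simpl; ring| left; unfold seg_end; simpl; ring].
        unfold same_point, seg_end; simpl. split. ring. right; right; exists 0%Z; simpl; ring.
      * simpl. rewrite !mer_len. rewrite Rabs_left1 by lra. rewrite Rabs_right by lra. lra.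
    + apply glb_le with (path_length f (mer r1 PI t1 :: mer PI r2 t2 :: nil)).
      * eexists; split; [|reflexivity]. simpl.
        split. apply mer_adm; lra.
        split. split; [simpl; ring| right; right; exists 0%Z; simpl; ring].
        split. apply mer_adm; lra.
        split. split; [unfold seg_end, seg_start; simpl; ring| right; left; unfold seg_end; simpl; ring].
        unfold same_point, seg_end; simpl. split. ring. right; right; exists 0%Z; simpl; ring.
      * simpl. rewrite !mer_len. rewrite Rabs_right by lra. rewrite Rabs_left1 by lra. lra.
  - unfold rdist. apply is_glb_Rbar_unique. split.
    + intros L [l [Hc ->]]. apply (chain_ge f) in Hc; auto. simpl in *. lra.
    + intros b Hb. apply Hb. exists (cons (mer 0 PI 0) nil). split.
      * simpl. split. apply mer_adm; lra.
        split. unfold pole_p, seg_start; split; simpl; [ring| left; reflexivity].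
        unfold same_point, seg_end, pole_q; simpl. split. ring. right; left; ring.
      * simpl. rewrite mer_len. rewrite Rabs_right by lra. ring.
Qed.
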